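(* Let $n\ge1$, identify the symmetric group $\mathfrak S_n$ with the group of permutations of $\mathbb Z/n$, let $\gamma$ be the permutation $i\mapsto i+1$, let $(\mathbb Z/n)^*$ be the subgroup of permutations $i\mapsto ki$ with $\gcd(k,n)=1$, and for $d\mid n$ let $(n/d)\mathbb Z/n$ be the cyclic subgroup of order $d$ generated by $\gamma^{n/d}$ (normalized by $(\mathbb Z/n)^*$). Let $S_n=\operatorname{Ind}_{\langle\gamma\rangle}^{\mathfrak S_n}\chi$, where $\chi$ is a faithful one-dimensional complex character of $\langle\gamma\rangle\cong\mathbb Z/n$. Then, in the representation ring (equivalently, as an identity of characters), \[S_n=\sum_{d\mid n}\mu(d)\,\operatorname{Ind}_{((n/d)\mathbb Z/n)\rtimes(\mathbb Z/n)^*}^{\mathfrak S_n}\mathbb 1,\] where $\mathbb 1$ is the trivial representation and $\mu$ is the Möbius function. *)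

(* Defs.v *)
From HB Require Import structures.
From mathcomp Require Import all_boot all_order all_algebra all_fingroup all_solvable all_field all_character.
Set Implicit Arguments. Unset Strict Implicit. Unset Printing Implicit Defensive.
Import Order.TTheory GRing.Theory Num.Theory.

(* Throughout, n = m.+1 >= 1 and Z/n is represented by 'I_m.+1 (its
   canonical additive group structure is addition mod n); multiplication
   mod n is computed with inZp. *)

(* Moebius function on positive integers (value at 0 irrelevant). *)
Definition moebius (d : nat) : int :=
  if (0 < d)%N && all (fun p => logn p d == 1)%N (primes d)
  then ((-1) ^+ size (primes d))%R else 0%R.

Definition gamma (m : nat) : {perm 'I_m.+1} :=
  perm (@GRing.addIr _ (inZp 1 : 'I_m.+1)).

Definition units_perm (m : nat) : {set {perm 'I_m.+1}} :=
  [set s : {perm 'I_m.+1} | [exists k : 'I_m.+1,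
      coprime k m.+1 && [forall i : 'I_m.+1, s i == inZp (k * i)]]].

(* ((n/d)Z/n) semidirect (Z/n)^x : the subgroup generated by gamma^(n/d)
   and (Z/n)^x, which equals the product set of the two. *)
Definition affine_sub (m d : nat) : {group {perm 'I_m.+1}} :=
  <<(<[gamma m ^+ (m.+1 %/ d)]> * units_perm m)>>%G.

(* Main.v *)
Require Import Defs.
From HB Require Import structures.
From mathcomp Require Import all_boot all_order all_algebra all_fingroup all_solvable all_field all_character.
From mathcomp Require Import ring zify.
Import Order.TTheory GRing.Theory Num.Theory.
Set Implicit Arguments. Unset Strict Implicit. Unset Printing Implicit Defensive.

Local Open Scope ring_scope.

Lemma moebius1 : moebius 1 = 1.
Proof. by []. Qed.

Lemma moebius_sq p d : prime p -> (p * p %| d)%N -> moebius d = 0.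
Proof.
move=> pp dv; rewrite /moebius; case: ifP => // /andP[d0 /allP H].
have pd : p \in primes d.
  by rewrite mem_primes pp d0 /= (dvdn_trans (dvdn_mulr p (dvdnn p)) dv).
have := H p pd; move/eqP => lg.
have : (p ^ 2 %| d)%N by rewrite expnS expn1.
by rewrite pfactor_dvdn // lg.
Qed.

Lemma moebius_pe p e : prime p -> (0 < e)%N -> ~~ (p %| e)%N ->
  moebius (p * e) = - moebius e.
Proof.
move=> pp e0 npe; have p0 := prime_gt0 pp.
have pe0 : (0 < p * e)%N by rewrite muln_gt0 p0.
have pn : p \notin primes e by rewrite mem_primes pp e0 /= npe.
have perm : perm_eq (primes (p * e)) (p :: primes e).
  apply: uniq_perm; first exact: primes_uniq.
    by rewrite /= pn primes_uniq.
  by move=> q; rewrite primesM // primes_prime // !in_cons in_nil orbF.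
rewrite /moebius pe0 e0 /= (perm_all _ perm) (perm_size perm) /=.
have -> : (logn p (p * e) == 1)%N.
  by rewrite lognM // logn_prime // eqxx logn_coprime // prime_coprime.
have -> : all (fun q => logn q (p * e) == 1)%N (primes e) =
          all (fun q => logn q e == 1)%N (primes e).
  apply: eq_in_all => q qe; rewrite lognM // logn_prime //.
  have qp : q != p by apply: contraNneq pn => <-.
  by rewrite (negbTE qp).
by case: (all _ (primes e)) => /=; rewrite ?oppr0 // exprS mulN1r.
Qed.

Lemma mem_div g d : (0 < g)%N -> (d \in divisors g) = (d %| g)%N.
Proof. by move=> g0; rewrite -dvdn_divisors. Qed.

Lemma moebius_sum g : (0 < g)%N ->
  \sum_(d <- divisors g) moebius d = (g == 1%N)%:R :> int.
Proof.
move=> g0; case: (ltngtP g 1) => [|g1|->]; first by rewrite ltnNge g0.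
  2: by rewrite /divisors /= big_seq1 moebius1.
have pp := pdiv_prime g1; set p := pdiv g in pp *.
have pg : (p %| g)%N := pdiv_dvd g.
have p0 := prime_gt0 pp.
have gp0 : (0 < g %/ p)%N by rewrite divn_gt0 // dvdn_leq.
have gE : g = (p * (g %/ p))%N by rewrite mulnC divnK.
rewrite (bigID (fun d => p %| d)%N) /=.
have pr : perm_eq [seq (p * e)%N | e <- divisors (g %/ p)]
                  [seq d <- divisors g | (p %| d)%N].
  apply: uniq_perm.
  - rewrite map_inj_uniq ?divisors_uniq //.
    by move=> x y /eqP; rewrite eqn_pmul2l // => /eqP.
  - by rewrite filter_uniq ?divisors_uniq.
  move=> x; rewrite mem_filter mem_div //; apply/mapP/andP.
  - case=> e; rewrite mem_div // => eg ->; split; first exact: dvdn_mulr.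
    by rewrite gE dvdn_pmul2l.
  - case=> px xg; exists (x %/ p)%N; last by rewrite mulnC divnK.
    rewrite mem_div // -(@dvdn_pmul2l p) // -gE.
    by rewrite mulnC divnK.
rewrite -big_filter -(perm_big _ pr) big_map.
rewrite (bigID (fun e => p %| e)%N) /= big_seq_cond big1 ?add0r; last first.
  move=> e /andP[ed pe]; have := @moebius_sq p (p * e)%N pp.
  by apply; rewrite dvdn_pmul2l.
rewrite big_seq_cond (eq_bigr (fun e => - moebius e)); last first.
  move=> e /andP[ed pe]; apply: moebius_pe => //.
  by move: ed; rewrite mem_div // => /dvdn_gt0; apply.
rewrite sumrN -big_seq_cond.
have pr2 : perm_eq [seq e <- divisors (g %/ p) | ~~ (p %| e)%N]
                   [seq d <- divisors g | ~~ (p %| d)%N].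
  apply: uniq_perm; rewrite ?filter_uniq ?divisors_uniq //.
  move=> x; rewrite !mem_filter !mem_div //.
  case px: (p %| x)%N => //=.
  rewrite {2}gE Gauss_dvdr // coprime_sym prime_coprime //.
  by rewrite px.
rewrite -big_filter (perm_big _ pr2) big_filter addrC subrr.
by [].
Qed.

Local Close Scope ring_scope.

Lemma mod_cancel n v x y : coprime v n ->
  (v * x == v * y %[mod n]) = (x == y %[mod n]).
Proof.
move=> cv; wlog le : x y / x <= y.
  by move=> H; case: (leqP x y) => [/H //|/ltnW/H]; rewrite eq_sym [(x %% _ == _)]eq_sym.
rewrite eq_sym [(x %% _ == _)]eq_sym !eqn_mod_dvd ?leq_mul2l ?le ?orbT //.
by rewrite -mulnBr Gauss_dvdr // coprime_sym.
Qed.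

Definition afun m (v c : nat) (x : 'I_m.+1) : 'I_m.+1 := inZp (v * x + c).
Arguments afun : clear implicits.

Lemma afun_inj m v c : coprime v m.+1 -> injective (afun m v c).
Proof.
move=> cv x y /(congr1 val) /= /eqP; rewrite eqn_modDr mod_cancel //.
by rewrite !modn_small // => /eqP /val_inj.
Qed.

Definition aff m (v c : nat) : {perm 'I_m.+1} :=
  match coprime v m.+1 =P true with
  | ReflectT H => perm (@afun_inj m v c H)
  | ReflectF _ => 1%g
  end.
Arguments aff : clear implicits.

Lemma affE m v c x : coprime v m.+1 -> aff m v c x = afun m v c x.
Proof. by rewrite /aff; case: eqP => // H _; rewrite permE. Qed.

Lemma aff_val m v c x : coprime v m.+1 -> val (aff m v c x) = (v * x + c) %% m.+1.
Proof. by move=> cv; rewrite affE. Qed.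

Lemma aff_congr m v c v' c' : coprime v m.+1 ->
  v = v' %[mod m.+1] -> c = c' %[mod m.+1] -> aff m v c = aff m v' c'.
Proof.
move=> cv ev ec; have cv' : coprime v' m.+1 by rewrite -coprime_modl -ev coprime_modl.
apply/permP => x; apply: val_inj; rewrite !aff_val //.
by rewrite -modnDm -modnMml ev ec modnMml modnDm.
Qed.

Lemma aff_inj m v c v' c' : coprime v m.+1 -> coprime v' m.+1 ->
  aff m v c = aff m v' c' -> (v = v' %[mod m.+1]) /\ (c = c' %[mod m.+1]).
Proof.
move=> cv cv' E.
have E0 := congr1 (fun s : {perm _} => val (s ord0)) E.
have E1 := congr1 (fun s : {perm _} => val (s (inZp 1))) E.
move: E0 E1; rewrite /= !aff_val //= !muln0 !add0n => E0.
rewrite -modnDmr E0 modnDmr => /eqP; rewrite eqn_modDr -modnMmr -[in X in _ == X -> _]modnMmr.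
by rewrite modn_mod !modnMmr !muln1 => /eqP.
Qed.

Lemma affM m v c v' c' : coprime v m.+1 -> coprime v' m.+1 ->
  (aff m v c * aff m v' c' = aff m (v' * v) (v' * c + c'))%g.
Proof.
move=> cv cv'; have cvv : coprime (v' * v) m.+1 by rewrite coprimeMl cv cv'.
apply/permP => x; apply: val_inj; rewrite permM !aff_val //.
by rewrite /= -modnDml modnMmr modnDml mulnDr mulnA addnA.
Qed.

Lemma aff1 m : aff m 1 0 = 1%g.
Proof.
apply/permP => x; apply: val_inj; rewrite perm1 aff_val ?coprime1n //.
by rewrite mul1n addn0 modn_small.
Qed.

Lemma gammaE m : gamma m = aff m 1 1.
Proof.
apply/permP => x; apply: val_inj; rewrite aff_val ?coprime1n // /gamma permE /=.
by rewrite modnDmr mul1n.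
Qed.

Lemma gammaX m k : (gamma m ^+ k)%g = aff m 1 k.
Proof.
elim: k => [|k IH]; first by rewrite expg0 aff1.
by rewrite expgSr IH gammaE affM ?coprime1n // !mul1n addn1.
Qed.


Lemma aff_conj m u b v c : coprime u m.+1 -> coprime v m.+1 -> u <= m.+1 ->
  (aff m u b ^ aff m v c)%g = aff m u (v * b + (m.+2 - u) * c).
Proof.
move=> cu cv um.
have E : (aff m v c * aff m u (v * b + (m.+2 - u) * c) = aff m u b * aff m v c)%g.
  rewrite !affM //; apply: aff_congr; first by rewrite coprimeMl cu cv.
    by rewrite mulnC.
  have -> : u * c + (v * b + (m.+2 - u) * c) = c * m.+1 + (v * b + c).
    rewrite mulnBl.
    have : u * c <= m.+2 * c by rewrite leq_mul2r (leq_trans um) ?orbT.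
    nia.
  by rewrite modnMDl.
by rewrite conjgE -E mulKg.
Qed.

Definition Pset m q : {set 'I_m.+1 * 'I_m.+1} :=
  [set p : 'I_m.+1 * 'I_m.+1 | coprime p.1 m.+1 && (q %| p.2)].
Arguments Pset : clear implicits.
Definition Hset m q : {set {perm 'I_m.+1}} :=
  [set aff m (val p.1) (val p.2) | p in Pset m q].
Arguments Hset : clear implicits.

Lemma aff_inj_P m q : {in Pset m q &, injective (fun p : 'I_m.+1 * 'I_m.+1 => aff m p.1 p.2)}.
Proof.
move=> [v c] [v' c']; rewrite !inE /= => /andP[cv _] /andP[cv' _] E.
have [ev ec] := aff_inj cv cv' E.
by rewrite !modn_small // in ev ec; congr pair; apply: val_inj.
Qed.

Lemma dvd_modn q n c : q %| n -> (q %| c %% n) = (q %| c).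
Proof. by move=> qn; rewrite /dvdn modn_dvdm. Qed.

Lemma memH m q v c : q %| m.+1 -> coprime v m.+1 ->
  (aff m v c \in Hset m q) = (q %| c).
Proof.
move=> qn cv; apply/imsetP/idP.
- case=> p; rewrite inE => /andP[cp qp] E.
  have [_ ec] := aff_inj cv cp E.
  by rewrite -(dvd_modn c qn) ec modn_small // ltn_ord.
- move=> qc; exists (inZp v, inZp c); rewrite ?inE /= ?coprime_modl ?cv ?dvd_modn //.
  by apply: aff_congr => //=; rewrite modn_mod.
Qed.

Lemma HsetP m q s : s \in Hset m q ->
  exists v c, [/\ coprime v m.+1, q %| c & s = aff m v c].
Proof.
by case/imsetP=> p; rewrite inE => /andP[cp qp] ->; exists p.1, p.2.
Qed.

Lemma Hset_group m q : q %| m.+1 -> group_set (Hset m q).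
Proof.
move=> qn; apply/group_setP; split; first by rewrite -aff1 memH ?coprime1n.
move=> x y /HsetP[v [c [cv qc ->]]] /HsetP[v' [c' [cv' qc' ->]]].
rewrite affM // memH //; last by rewrite coprimeMl cv cv'.
by rewrite dvdn_add // dvdn_mull.
Qed.

Lemma memC m u t : coprime u m.+1 ->
  (aff m u t \in <[gamma m]>%g) = (u == 1 %[mod m.+1]).
Proof.
move=> cu; apply/idP/idP.
- case/cycleP=> i; rewrite gammaX => E.
  by have [-> _] := aff_inj cu (coprime1n _) E.
- move/eqP=> e; rewrite (aff_congr (c' := t) cu e) // -gammaX.
  exact: mem_cycle.
Qed.

Lemma units_permP m s : s \in units_perm m -> exists k, coprime k m.+1 /\ s = aff m k 0.
Proof.
rewrite inE => /existsP[k /andP[ck /forallP E]]; exists k; split=> //.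
apply/permP => i; apply: val_inj; rewrite aff_val // addn0.
by rewrite (eqP (E i)).
Qed.

Lemma affine_subE m d : d \in divisors m.+1 ->
  (affine_sub m d :=: Hset m (m.+1 %/ d))%g.
Proof.
rewrite -dvdn_divisors // => dn.
have qn : m.+1 %/ d %| m.+1 by apply: dvdn_div.
set q := m.+1 %/ d in qn *.
have Hg := Hset_group qn.
apply/eqP; rewrite eqEsubset; apply/andP; split.
  suff : (<<(<[gamma m ^+ q]> * units_perm m)>> \subset Group Hg)%g by [].
  rewrite gen_subG -(mulGid (Group Hg)) mulgSS //.
    by rewrite cycle_subG gammaX /= memH ?coprime1n.
  apply/subsetP => s /units_permP [k [ck ->]].
  by rewrite /= memH ?dvdn0.
apply/subsetP => s /HsetP [v [c [cv qc ->]]].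
have -> : aff m v c = (aff m v 0 * aff m 1 c)%g.
  by rewrite affM ?coprime1n // mul1n muln0.
rewrite /affine_sub /=; apply: groupM; apply: mem_gen.
  rewrite -[aff m v 0]mul1g; apply: mem_mulg; first exact: group1.
  rewrite inE; apply/existsP; exists (inZp v); rewrite /= coprime_modl cv /=.
  apply/forallP => i; apply/eqP; apply: val_inj.
  by rewrite aff_val //= addn0 modnMml.
rewrite -[aff m 1 c]mulg1; apply: mem_mulg.
  case/dvdnP: qc => k ->; rewrite -gammaX mulnC expgM; exact: mem_cycle.
rewrite inE; apply/existsP; exists (inZp 1); rewrite /= coprime_modl coprime1n /=.
apply/forallP => i; apply/eqP; apply: val_inj.
by rewrite perm1 /= modnMml mul1n modn_small.
Qed.

Local Open Scope ring_scope.

Lemma sum_mult (k d : nat) (F : nat -> algC) : (0 < d)%N ->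
  \sum_(0 <= v < k * d | (d %| v)%N) F v = \sum_(0 <= w < k) F (w * d)%N.
Proof.
move=> d0; elim: k => [|k IH]; first by rewrite mul0n !big_geq.
rewrite big_nat_recr //= -IH mulSn addnC.
rewrite (@big_cat_nat _ _ _ (k * d)) //= ?leq_addr //; congr (_ + _).
rewrite -{1}[(k * d)%N]add0n big_addn addKn.
rewrite (eq_bigl (fun i => d %| i)%N); last first.
  by move=> i; rewrite dvdn_addl // dvdn_mull.
rewrite big_ltn_cond // dvdn0 add0n big_nat_cond big1 ?addr0 //.
move=> i /andP[/andP[i1 id] di].
by move: (dvdn_leq i1 di); rewrite leqNgt id.
Qed.

Lemma geom (z : algC) n : z ^+ n = 1 ->
  \sum_(i < n) z ^+ i = if z == 1 then n%:R else 0.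
Proof.
move=> zn; case: eqP => [->|/eqP ne].
  by rewrite (eq_bigr (fun _ => 1)) ?sumr_const ?card_ord // => i _; rewrite expr1n.
have := subrX1 z n; rewrite zn subrr => /esym/eqP.
by rewrite mulf_eq0 subr_eq0 (negbTE ne) /= => /eqP.
Qed.

Lemma coprime_moeb n v : (0 < n)%N ->
  (coprime v n)%:R = \sum_(d <- divisors n | (d %| v)%N) (moebius d)%:~R :> algC.
Proof.
move=> n0; have g0 : (0 < gcdn v n)%N by rewrite gcdn_gt0 n0 orbT.
have pr : perm_eq [seq d <- divisors n | (d %| v)%N] (divisors (gcdn v n)).
  apply: uniq_perm; rewrite ?filter_uniq ?divisors_uniq //.
  by move=> d; rewrite mem_filter !mem_div // dvdn_gcd andbC.
rewrite -big_filter (perm_big _ pr) -mulrz_sumr moebius_sum //.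
by rewrite /coprime; case: (gcdn v n == 1)%N.
Qed.

Lemma ramanujan n (w : algC) y : (0 < n)%N ->
  (forall k, (w ^+ k == 1) = (n %| k)%N) ->
  \sum_(v < n | coprime v n) w ^+ (v * y) =
  \sum_(d <- divisors n) (moebius d)%:~R * ((n %/ d %| y)%:R * (n %/ d)%:R).
Proof.
move=> n0 wP.
rewrite big_mkcond /= (eq_bigr (fun v : 'I_n => \sum_(d <- divisors n)
   (moebius d)%:~R * ((d %| v)%:R * w ^+ (v * y)))); last first.
  move=> v _; transitivity ((coprime v n)%:R * w ^+ (v * y)).
    by case: ifP => _; rewrite ?mul1r ?mul0r.
  rewrite coprime_moeb // big_mkcond mulr_suml /=.
  by apply: eq_bigr => d _; case: ifP => _; rewrite ?mul1r ?mul0r ?mulr0.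
rewrite exchange_big /=; apply: eq_big_seq => d.
rewrite mem_div // => dn; rewrite -mulr_sumr; congr (_ * _).
have d0 : (0 < d)%N by apply: dvdn_gt0 dn.
have nE : n = (n %/ d * d)%N by rewrite divnK.
transitivity (\sum_(0 <= v < n | (d %| v)%N) w ^+ (v * y)).
  rewrite big_mkord [RHS]big_mkcond /=; apply: eq_bigr => v _.
  by case: ifP => _; rewrite ?mul1r ?mul0r.
rewrite {1}nE sum_mult //.
rewrite (eq_bigr (fun i => (w ^+ (d * y)) ^+ i)); last first.
  by move=> i _; rewrite -exprM (mulnC i d) mulnAC.
rewrite (big_mkord xpredT) geom; last first.
  rewrite -exprM; apply/eqP; rewrite wP mulnAC [(d * _)%N]mulnC -nE.
  exact: dvdn_mulr.
rewrite wP {1}nE mulnC dvdn_pmul2l // .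
by case: ifP => _; rewrite ?mul1r ?mul0r.
Qed.

Lemma Rvb n (w : algC) v b : (0 < n)%N -> (forall k, (w ^+ k == 1) = (n %| k)%N) ->
  coprime v n ->
  \sum_(v' < n | coprime v' n) w ^+ (v' * (v * b)) =
  \sum_(v' < n | coprime v' n) w ^+ (v' * b).
Proof.
move=> n0 wP cv; rewrite !ramanujan //; apply: eq_big_seq => d.
rewrite mem_div // => dn; congr (_ * (_ * _)).
have qn : (n %/ d %| n)%N by apply: dvdn_div.
by rewrite Gauss_dvdr // coprime_sym (coprime_dvdr qn).
Qed.

Lemma Ua_neq0 n : (0 < n)%N -> \sum_(v < n | coprime v n) (1 : algC) != 0.
Proof.
move=> n0; rewrite sumr_const pnatr_eq0 -lt0n.
apply/card_gt0P; exists (Ordinal (ltn_pmod 1 n0)).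
have H : coprime (1 %% n) n by rewrite coprime_modl coprime1n.
exact: H.
Qed.

Lemma fld1 (U q d X mu : algC) : U != 0 -> q != 0 -> d != 0 ->
  (U * (q * d))^-1 * (mu * (X * q)) = (U * d)^-1 * X * mu.
Proof. by move=> U0 q0 d0; field; rewrite U0 q0 d0. Qed.

Lemma fld2 (E R U N : algC) : U != 0 -> N != 0 ->
  E * R = (U * N)^-1 * (E * N * R * U).
Proof. by move=> U0 N0; field; rewrite U0 N0. Qed.

Lemma fld3 (X : algC) (k : nat) : k%:R != 0 :> algC -> k%:R^-1 * X *+ k = X.
Proof. by move=> k0; rewrite -mulr_natr mulrAC mulVf ?mul1r. Qed.

Lemma core n (w : algC) (u b : nat) : (0 < n)%N ->
  (forall k, (w ^+ k == 1) = (n %| k)%N) ->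
  \sum_(v < n | coprime v n) \sum_(c < n)
      n%:R^-1 * ((n %| n.+1 - u)%:R * w ^+ (v * b + (n.+1 - u) * c))
  = \sum_(v < n | coprime v n) \sum_(c < n) \sum_(d <- divisors n)
       (((\sum_(v < n | coprime v n) (1 : algC)) * d%:R)^-1
          * (n %/ d %| v * b + (n.+1 - u) * c)%:R) *~ moebius d.
Proof.
move=> n0 wP; set e := (n.+1 - u)%N; set Ua := \sum_(v < n | coprime v n) (1 : algC).
have n0' : n%:R != 0 :> algC by rewrite pnatr_eq0 -lt0n.
have Ua0 : Ua != 0 := Ua_neq0 n0.
set Rb := \sum_(v < n | coprime v n) w ^+ (v * b).
transitivity ((n %| e)%:R * Rb).
  rewrite /Rb mulr_sumr; apply: eq_bigr => v cv.
  case: (boolP (n %| e)%N) => ne; last first.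
    by rewrite mul0r big1 // => c _; rewrite mul0r mulr0.
  rewrite mul1r (eq_bigr (fun _ => n%:R^-1 * w ^+ (v * b))); last first.
    move=> c _; rewrite mul1r exprD.
    have -> : w ^+ (e * c) = 1 by apply/eqP; rewrite wP dvdn_mulr.
    by rewrite mulr1.
  by rewrite sumr_const card_ord fld3.
transitivity ((Ua * n%:R)^-1 * \sum_(v < n | coprime v n) \sum_(c < n)
     \sum_(v' < n | coprime v' n) w ^+ (v' * (v * b + e * c))); last first.
  rewrite mulr_sumr; apply: eq_bigr => v cv; rewrite mulr_sumr; apply: eq_bigr => c _.
  rewrite ramanujan // mulr_sumr; apply: eq_big_seq => d.
  rewrite mem_div // => dn.
  have d0 : (0 < d)%N by apply: dvdn_gt0 dn.
  have nE : n = (n %/ d * d)%N by rewrite divnK.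
  have q0 : (n %/ d)%:R != 0 :> algC.
    by rewrite pnatr_eq0 -lt0n divn_gt0 // dvdn_leq.
  have d0' : d%:R != 0 :> algC by rewrite pnatr_eq0 -lt0n.
  by rewrite -[in RHS]mulrzr {1}nE natrM fld1.
have inner v : coprime v n -> \sum_(c < n) \sum_(v' < n | coprime v' n)
    w ^+ (v' * (v * b + e * c)) = (n %| e)%:R * n%:R * Rb.
  move=> cv; rewrite exchange_big /= /Rb -(Rvb b n0 wP cv) mulr_sumr.
  apply: eq_bigr => v' cv'.
  rewrite (eq_bigr (fun c : 'I_n => w ^+ (v' * (v * b)) * (w ^+ (v' * e)) ^+ c)); last first.
    by move=> c _; rewrite mulnDr exprD; congr (_ * _); rewrite mulnA exprM.
  rewrite -mulr_sumr geom; last first.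
    rewrite -exprM; apply/eqP; rewrite wP; apply: dvdn_mull; exact: dvdnn.
  rewrite wP Gauss_dvdr; last by rewrite coprime_sym.
  case: (n %| e)%N; first by rewrite mul1r mulrC.
  by rewrite mulr0 !mul0r.
rewrite (eq_bigr (fun _ => (n %| e)%:R * n%:R * Rb)); last by move=> v cv; apply: inner.
rewrite -(mulr1 (_ * _ * Rb)) -mulr_sumr -/Ua.
exact: fld2.
Qed.


Lemma cfun_mulrzE (gT : finGroupType) (B : {set gT}) (phi : 'CF(B)) (z : int) x :
  (phi *~ z) x = phi x *~ z.
Proof.
case: z => k; first by rewrite -!pmulrn muln_cfunE.
by rewrite !NegzE !mulrNz cfunE -!pmulrn muln_cfunE.
Qed.

Lemma gX1 m k : ((gamma m ^+ k)%g == 1%g) = (m.+1 %| k)%N.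
Proof.
rewrite gammaX -aff1; apply/eqP/idP.
- move=> E; have [_ H] := aff_inj (coprime1n _) (coprime1n _) E.
  by rewrite mod0n in H; rewrite /dvdn H.
- by rewrite /dvdn => /eqP H; apply: aff_congr; rewrite ?coprime1n ?mod0n.
Qed.

Lemma card_C m : #|<[gamma m]>%g| = m.+1.
Proof.
apply/eqP; rewrite eqn_dvd -[#|_|]/(#[gamma m]%g).
by rewrite order_dvdn gX1 dvdnn -gX1 -order_dvdn dvdnn.
Qed.

Lemma fld4 (X : algC) k : k%:R != 0 :> algC -> k%:R^-1 * (X *+ k) = X.
Proof. by move=> k0; rewrite -[X *+ k]mulr_natl mulrA mulVf ?mul1r. Qed.

Lemma averaging (gT : finGroupType) (N : {group gT}) (F : gT -> algC) x :
  \sum_(y in [set: gT]) F (x ^ y)%g =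
  #|N|%:R^-1 * \sum_(y in [set: gT]) \sum_(s in N) F ((x ^ y) ^ s)%g.
Proof.
rewrite exchange_big /=.
rewrite [in RHS](eq_bigr (fun _ => \sum_(y in [set: gT]) F (x ^ y)%g)); last first.
  move=> s _; rewrite [RHS](reindex_inj (mulIg s)) /=.
  by apply: eq_big => [y|y _]; rewrite ?inE // conjgM.
rewrite sumr_const fld4 //.
by rewrite pnatr_eq0 -lt0n cardG_gt0.
Qed.

Definition Ngrp m := Group (@Hset_group m 1 (dvd1n m.+1)).

Lemma sumN m (F : {perm 'I_m.+1} -> algC) :
  \sum_(s in Ngrp m) F s =
  \sum_(v < m.+1 | coprime v m.+1) \sum_(c < m.+1) F (aff m v c).
Proof.
rewrite /= big_imset /=; last exact: aff_inj_P.
rewrite pair_big_dep /=; apply: eq_bigl => p.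
by rewrite inE dvd1n andbT.
Qed.


Lemma cond_e m u : (u < m.+1)%N -> (u == 1 %[mod m.+1])%N = (m.+1 %| m.+2 - u)%N.
Proof.
case: m => [|m] lt; first by rewrite !modn1 dvd1n.
rewrite (modn_small lt) modn_small //.
case: u lt => [|u] lt.
  rewrite subn0 (_ : m.+3 = 1 + m.+2)%N ?dvdn_addl ?dvdn1 //; lia.
rewrite subSS eqSS; case: u lt => [|u] lt; first by rewrite subn0 dvdnn.
by rewrite gtnNdvd //; lia.
Qed.

Lemma omegaP m (chi : 'CF(<[gamma m]>)) :
  chi \is a linear_char -> cfaithful chi ->
  forall k, (chi (gamma m) ^+ k == 1) = (m.+1 %| k)%N.
Proof.
move=> lin fth k; rewrite -lin_charX ?cycle_id //.
apply/eqP/idP.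
- move=> E; have : (gamma m ^+ k)%g \in cfker chi.
    by rewrite cfkerEchar ?lin_charW // inE mem_cycle lin_char1 // E eqxx.
  move: fth; rewrite cfaithfulE => /subsetP S /S.
  by rewrite inE -gX1.
- by rewrite -gX1 => /eqP ->; exact: lin_char1.
Qed.

Lemma chi_aff m (chi : 'CF(<[gamma m]>)) u t :
  chi \is a linear_char -> coprime u m.+1 -> (u < m.+1)%N ->
  chi (aff m u t) = (m.+1 %| m.+2 - u)%:R * chi (gamma m) ^+ t.
Proof.
move=> lin cu lt; rewrite -cond_e //.
case: (boolP (u == 1 %[mod m.+1])%N) => e.
- rewrite mul1r (@aff_congr m u t 1 t cu (eqP e) (erefl _)) -gammaX.
  by rewrite lin_charX ?cycle_id.
- by rewrite mul0r cfun0 // memC // (negbTE e).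
Qed.

Lemma card_K m d : d \in divisors m.+1 ->
  #|affine_sub m d|%:R = (\sum_(v < m.+1 | coprime v m.+1) (1 : algC)) * d%:R.
Proof.
move=> dd; have dn : (d %| m.+1)%N by rewrite dvdn_divisors.
have d0 : (0 < d)%N by apply: dvdn_gt0 dn.
have qn : (m.+1 %/ d %| m.+1)%N by apply: dvdn_div.
have q0 : (0 < m.+1 %/ d)%N by rewrite divn_gt0 // dvdn_leq.
rewrite (affine_subE dd) card_in_imset; last exact: aff_inj_P.
rewrite -sumr_const (eq_bigl (fun p : 'I_m.+1 * 'I_m.+1 =>
   coprime p.1 m.+1 && (m.+1 %/ d %| p.2)%N)); last by move=> p; rewrite inE.
rewrite -(@pair_big_dep _ _ _ _ _ (fun v : 'I_m.+1 => coprime v m.+1)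
  (fun _ (c : 'I_m.+1) => m.+1 %/ d %| c)%N (fun _ _ => (1 : algC))) /= mulr_suml; apply: eq_bigr => v _; rewrite mul1r.
rewrite -(big_mkord (fun c => m.+1 %/ d %| c)%N (fun _ => 1)).
rewrite {1}(_ : m.+1 = d * (m.+1 %/ d))%N; last by rewrite mulnC divnK.
by rewrite sum_mult // sumr_const_nat subn0.
Qed.

Lemma memK m d u t : d \in divisors m.+1 -> coprime u m.+1 ->
  (aff m u t \in affine_sub m d) = (m.+1 %/ d %| t)%N.
Proof.
move=> dd cu; have dn : (d %| m.+1)%N by rewrite dvdn_divisors.
by rewrite (affine_subE dd) memH // dvdn_div.
Qed.

Lemma K_subN m d z : d \in divisors m.+1 -> z \in affine_sub m d -> z \in Ngrp m.
Proof.
move=> dd; rewrite (affine_subE dd) => /HsetP [v [c [cv _ ->]]].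
by rewrite /= memH ?dvd1n.
Qed.

Lemma C_subN m z : z \in <[gamma m]>%g -> z \in Ngrp m.
Proof. by case/cycleP=> i ->; rewrite gammaX /= memH ?dvd1n ?coprime1n. Qed.

Lemma key m (chi : 'CF(<[gamma m]>)) (w : {perm 'I_m.+1}) :
  chi \is a linear_char -> cfaithful chi ->
  \sum_(s in Ngrp m) #|<[gamma m]>%g|%:R^-1 * chi (w ^ s)%g =
  \sum_(s in Ngrp m) \sum_(d <- divisors m.+1)
      (#|affine_sub m d|%:R^-1 * ((w ^ s)%g \in affine_sub m d)%:R) *~ moebius d.
Proof.
move=> lin fth.
case: (boolP (w \in Ngrp m)) => wN; last first.
  have out s z : s \in Ngrp m -> (w ^ s)%g = z -> z \notin Ngrp m.
    move=> sN <-; apply: contra wN => H.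
    by rewrite -(conjgK s w) groupJ ?groupV.
  rewrite big1; last first.
    move=> s sN; rewrite cfun0 ?mulr0 //.
    by apply: contra (out s _ sN erefl); apply: C_subN.
  rewrite big1 // => s sN; rewrite big1_seq // => d /andP[_ dd].
  have : (w ^ s)%g \notin affine_sub m d.
    by apply: contra (out s _ sN erefl); apply: K_subN.
  by move/negbTE ->; rewrite mulr0 mul0rz.
move: wN => /imsetP [[u b]]; rewrite inE /= => /andP[cu _] ->.
rewrite !sumN.
rewrite (eq_bigr (fun v : 'I_m.+1 => \sum_(c < m.+1)
   m.+1%:R^-1 * ((m.+1 %| m.+2 - u)%:R * chi (gamma m) ^+ (v * b + (m.+2 - u) * c)))); last first.
  move=> v cv; apply: eq_bigr => c _.
  by rewrite aff_conj ?(ltnW (ltn_ord u)) // card_C chi_aff.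
rewrite [RHS](eq_bigr (fun v : 'I_m.+1 => \sum_(c < m.+1) \sum_(d <- divisors m.+1)
   (((\sum_(v < m.+1 | coprime v m.+1) (1 : algC)) * d%:R)^-1 *
      (m.+1 %/ d %| v * b + (m.+2 - u) * c)%:R) *~ moebius d)); last first.
  move=> v cv; apply: eq_bigr => c _.
  rewrite aff_conj ?(ltnW (ltn_ord u)) //; apply: eq_big_seq => d dd.
  by rewrite card_K // memK.
have := @core m.+1 (chi (gamma m)) u b (ltn0Sn m) (omegaP lin fth).
by move=> H; exact H.
Qed.

Theorem mainTheorem5 (m : nat) (chi : 'CF(<[gamma m]>))
    (chi_lin : chi \is a linear_char) (chi_faithful : cfaithful chi) :
  'Ind[[set: {perm 'I_m.+1}]] chi =
  \sum_(d <- divisors m.+1) ('Ind[[set: {perm 'I_m.+1}]] (1 : 'CF(affine_sub m d))) *~ moebius d.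
Proof.
apply/cfunP => x; rewrite cfIndE ?subsetT // sum_cfunE.
rewrite (eq_bigr (fun d => \sum_(y in [set: {perm 'I_m.+1}])
   (#|affine_sub m d|%:R^-1 * ((x ^ y)%g \in affine_sub m d)%:R) *~ moebius d)); last first.
  move=> d _; rewrite cfun_mulrzE cfIndE ?subsetT // mulr_sumr mulrz_suml.
  by apply: eq_bigr => y _; rewrite cfun1E.
rewrite exchange_big /= mulr_sumr.
rewrite (averaging (Ngrp m) (fun z => #|<[gamma m]>%g|%:R^-1 * chi z)).
rewrite (averaging (Ngrp m) (fun z => \sum_(d <- divisors m.+1)
      (#|affine_sub m d|%:R^-1 * (z \in affine_sub m d)%:R) *~ moebius d)).
congr (_ * _); apply: eq_bigr => y _; exact: key.
Qed.
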